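(* Let $(\alpha_j)_{j\in\mathbb N}$, $(\beta_j)_{j\in\mathbb N}$, $(\sigma_j)_{j\in\mathbb N}$ be real sequences with $$\alpha_j\ge 0,\qquad 1\ge\beta_1\ge\beta_2\ge\cdots>0,\qquad 1<\sigma_1\le\sigma_2\le\cdots,$$ and suppose there is a constant $c>0$ with $0\le\alpha_j\le c\beta_j$ for all $j\in\mathbb N$. Let $\mathcal B=\{\mathcal B_d\}_{d\in\mathbb N}$ be the associated sequence of additive random fields with Korobov-kernel marginals (see context). Then $\mathcal B$ is strongly polynomially tractable for the normalized error criterion (NOR) if and only if $$A_*:=\liminf_{d\to\infty}\frac{\ln(1/\beta_d)}{\ln d}>1,$$ and in that case the exponent of strong polynomial tractability (for NOR) is $$p^{\rm str-avg}=\max\Big\{\frac{2}{A_*-1},\frac{2}{\sigma_1-1}\Big\}.$$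
   Context: For $\alpha\ge0$, $\beta>0$, $\sigma>1$, let $B_{\alpha,\beta,\sigma}(x)$, $x\in[0,1]$, be a zero-mean random process with covariance function $\kappa_{\alpha,\beta,\sigma}(x,y)=\alpha+2\beta\sum_{k=1}^\infty k^{-\sigma}\cos(2\pi k(x-y))$. Let $B_j$, $j\in\mathbb N$, be independent zero-mean random processes on $[0,1]$ with covariance functions $\kappa_{\alpha_j,\beta_j,\sigma_j}$, and for $d\in\mathbb N$ let $\mathcal B_d(\mathbf x)=\sum_{j=1}^d B_j(x_j)$, $\mathbf x\in[0,1]^d$, a zero-mean random field with covariance $\kappa^{\mathcal B_d}(\mathbf x,\mathbf y)=\sum_{j=1}^d\kappa_{\alpha_j,\beta_j,\sigma_j}(x_j,y_j)$, viewed as a random element of $L_2([0,1]^d)$. The $n$th minimal average case error is $e^{\mathcal B_d}(n)=\inf\{(\mathbb E\|\mathcal B_d-\sum_{m=1}^n(\mathcal B_d,\varphi_m)_{2,d}\psi_m\|_{2,d}^2)^{1/2}:\varphi_m,\psi_m\in L_2([0,1]^d)\}$ and $e^{\mathcal B_d}(0)=(\mathbb E\|\mathcal B_d\|_{2,d}^2)^{1/2}$. (Equivalently, if $\lambda_{d,1}\ge\lambda_{d,2}\ge\cdots$ are the eigenvalues of the covariance operator of $\mathcal B_d$ on $L_2([0,1]^d)$, namely $\sum_{j=1}^d\alpha_j$ together with the numbers $\beta_j k^{-\sigma_j}$, $k\in\mathbb N$, $j=1,\dots,d$, each taken twice, then $e^{\mathcal B_d}(n)^2=\sum_{j>n}\lambda_{d,j}$.)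 For $\varepsilon\in(0,1)$, the NOR information complexity is $n^{\mathcal B_d,\mathrm{NOR}}(\varepsilon)=\min\{n\in\mathbb N: e^{\mathcal B_d}(n)\le\varepsilon\, e^{\mathcal B_d}(0)\}$. The problem is strongly polynomially tractable (SPT) for NOR if there are $C,p\ge0$ with $n^{\mathcal B_d,\mathrm{NOR}}(\varepsilon)\le C\varepsilon^{-p}$ for all $d\in\mathbb N$, $\varepsilon\in(0,1)$; the exponent $p^{\rm str-avg}$ is the infimum of such $p$. Convention: $2/(A_*-1)=0$ if $A_*=\infty$. *)

(* Defs.v *)
From Stdlib Require Import Reals List.
From Coquelicot Require Import Coquelicot.
Open Scope R_scope.

(* Sequences are indexed from 1 (value at index 0 is irrelevant). *)

Fixpoint sumj (f : nat -> R) (d : nat) : R :=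
  match d with O => 0 | S d' => sumj f d' + f (S d') end.

(* Indices of eigenvalues of the covariance operator of B_d:
   None               <-> the eigenvalue  sum_{j=1}^d alpha_j
   Some (j, k, copy)  <-> beta_j k^{-sigma_j}, j in 1..d, k >= 1, copy in {two copies} *)
Definition eig_idx := option (nat * nat * bool).

Definition valid_idx (d : nat) (i : eig_idx) : Prop :=
  match i with
  | None => True
  | Some (j, k, _) => (1 <= j <= d)%nat /\ (1 <= k)%nat
  end.

Definition eig (alpha beta sigma : nat -> R) (d : nat) (i : eig_idx) : R :=
  match i with
  | None => sumj alpha d
  | Some (j, k, _) => beta j * Rpower (INR k) (- sigma j)
  end.

(* e(0)^2 = E ||B_d||^2 = trace = sum of all eigenvalues *)
Definition total (alpha beta sigma : nat -> R) (d : nat) : R :=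
  sumj alpha d
  + 2 * sumj (fun j => beta j * Series (fun k => Rpower (INR (S k)) (- sigma j))) d.

Definition subset_sum (alpha beta sigma : nat -> R) (d : nat) (S : list eig_idx) : R :=
  fold_right (fun i acc => eig alpha beta sigma d i + acc) 0 S.

(* sum of the n largest eigenvalues (with multiplicity) = sup over sets of at most
   n distinct eigenvalue indices of the sum of the corresponding eigenvalues *)
Definition top_sum (alpha beta sigma : nat -> R) (d n : nat) : R :=
  real (Lub_Rbar (fun x => exists S : list eig_idx,
     NoDup S /\ List.Forall (valid_idx d) S /\ (length S <= n)%nat /\
     x = subset_sum alpha beta sigma d S)).

(* e^{B_d}(n)^2 = sum_{j>n} lambda_{d,j} *)
Definition err2 (alpha beta sigma : nat -> R) (d n : nat) : R :=
  total alpha beta sigma d - top_sum alpha beta sigma d n.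

Definition err (alpha beta sigma : nat -> R) (d n : nat) : R :=
  sqrt (err2 alpha beta sigma d n).

Definition is_nNOR (alpha beta sigma : nat -> R) (d : nat) (eps : R) (n : nat) : Prop :=
  err alpha beta sigma d n <= eps * err alpha beta sigma d 0 /\
  forall m, (m < n)%nat -> ~ (err alpha beta sigma d m <= eps * err alpha beta sigma d 0).

Definition SPT_with (alpha beta sigma : nat -> R) (p : R) : Prop :=
  0 <= p /\ exists C : R, 0 <= C /\
    forall (d : nat) (eps : R), (1 <= d)%nat -> 0 < eps < 1 ->
      exists n : nat, is_nNOR alpha beta sigma d eps n /\ INR n <= C * Rpower eps (- p).

Definition SPT (alpha beta sigma : nat -> R) : Prop :=
  exists p, SPT_with alpha beta sigma p.

Definition is_inf (P : R -> Prop) (x : R) : Prop :=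
  (forall p, P p -> x <= p) /\ (forall y, (forall p, P p -> y <= p) -> y <= x).

Definition Astar (beta : nat -> R) : Rbar :=
  LimInf_seq (fun d => ln (1 / beta d) / ln (INR d)).

(* 2/(A_*-1), with the convention 2/(A_*-1) = 0 if A_* = +oo *)
Definition two_over_Am1 (A : Rbar) : R :=
  match A with
  | Finite a => 2 / (a - 1)
  | _ => 0
  end.

(* Main.v *)
Require Import Defs.
From Stdlib Require Import Reals List Lra Lia Psatz Classical ZArith.
From Coquelicot Require Import Coquelicot.
Open Scope R_scope.

Lemma exp_le' x y : x <= y -> exp x <= exp y.
Proof. intros [H|H]; [left; apply exp_increasing; auto| subst; lra]. Qed.

Lemma ln_le' x y : 0 < x -> x <= y -> ln x <= ln y.
Proof. intros Hx [H|H]; [left; apply ln_increasing; auto| subst; lra]. Qed.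

Lemma ln_le_xm1 x : 0 < x -> ln x <= x - 1.
Proof.
  intros Hx. rewrite <- (ln_exp (x - 1)). apply ln_le'; auto.
  generalize (exp_ineq1_le (x - 1)); lra.
Qed.

Lemma rp_pos x y : 0 < Rpower x y.
Proof. unfold Rpower; apply exp_pos. Qed.

Lemma rp_one y : Rpower 1 y = 1.
Proof. unfold Rpower; rewrite ln_1, Rmult_0_r, exp_0; auto. Qed.

Lemma ln_INR_ge0 k : (1 <= k)%nat -> 0 <= ln (INR k).
Proof. intros H. rewrite <- ln_1. apply ln_le'. lra. apply le_INR in H. simpl in H. lra. Qed.

Lemma rp_le1 k s : (1 <= k)%nat -> 0 <= s -> Rpower (INR k) (- s) <= 1.
Proof.
  intros Hk Hs. unfold Rpower. rewrite <- exp_0. apply exp_le'.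
  generalize (ln_INR_ge0 k Hk); nra.
Qed.

Lemma rp_anti_exp x s s' : 1 <= x -> s <= s' -> Rpower x (- s') <= Rpower x (- s).
Proof. intros. apply Rle_Rpower; lra. Qed.

Lemma sumj_le (f g : nat -> R) d :
  (forall j, (1 <= j <= d)%nat -> f j <= g j) -> sumj f d <= sumj g d.
Proof.
  induction d; simpl; intros H; [lra|].
  assert (sumj f d <= sumj g d) by (apply IHd; intros; apply H; lia).
  assert (f (S d) <= g (S d)) by (apply H; lia). lra.
Qed.

Lemma sumj_nonneg (f : nat -> R) d :
  (forall j, (1 <= j <= d)%nat -> 0 <= f j) -> 0 <= sumj f d.
Proof.
  intros H. replace 0 with (sumj (fun _ => 0) d).
  apply sumj_le; auto. clear H. induction d; simpl; auto. rewrite IHd; lra.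
Qed.

Lemma sumj_plus f g d : sumj (fun j => f j + g j) d = sumj f d + sumj g d.
Proof. induction d; simpl; [lra| rewrite IHd; lra]. Qed.

Lemma sumj_scal a f d : sumj (fun j => a * f j) d = a * sumj f d.
Proof. induction d; simpl; [lra| rewrite IHd; lra]. Qed.

Lemma sumj_ext f g d : (forall j, (1 <= j <= d)%nat -> f j = g j) -> sumj f d = sumj g d.
Proof.
  induction d; simpl; intros H; auto. rewrite IHd by (intros; apply H; lia).
  rewrite H by lia; auto.
Qed.

Lemma sumj_const a d : sumj (fun _ => a) d = INR d * a.
Proof. induction d; simpl sumj; [simpl; lra|]. rewrite IHd, S_INR. lra. Qed.

Lemma sumj_sum_n a N : sumj a (S N) = sum_n (fun k => a (S k)) N.
Proof.
  induction N.
  - rewrite sum_O. simpl. lra.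
  - rewrite sum_Sn. change (sumj a (S (S N))) with (sumj a (S N) + a (S (S N))).
    rewrite IHN. reflexivity.
Qed.

Lemma sumj_mono_d f d d' : (d <= d')%nat -> (forall j, 0 <= f j) -> sumj f d <= sumj f d'.
Proof.
  induction 1; intros; [lra|]. simpl. specialize (IHle H0). specialize (H0 (S m)). lra.
Qed.

Definition zt (s : R) (k : nat) : R := Rpower (INR (S k)) (- s).

Lemma zeta_step s k : 1 < s -> 2 <= k ->
  (s - 1) * Rpower k (- s) + Rpower k (1 - s) <= Rpower (k - 1) (1 - s).
Proof.
  intros Hs Hk.
  assert (E1 : Rpower k (1 - s) = k * Rpower k (- s)).
  { replace (1 - s) with (1 + - s) by ring. rewrite Rpower_plus, Rpower_1 by lra. auto. }
  assert (Hl : 1 / k <= ln k - ln (k - 1)).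
  { assert (H := ln_le_xm1 ((k - 1) / k)).
    assert (ln ((k - 1) / k) = ln (k - 1) - ln k).
    { unfold Rdiv. rewrite ln_mult, ln_Rinv by (try apply Rinv_0_lt_compat; lra). ring. }
    assert ((k-1)/k - 1 = - (1 / k)) by (field; lra).
    assert (0 < (k-1)/k) by (apply Rdiv_lt_0_compat; lra). lra. }
  assert (E2 : Rpower (k - 1) (1 - s) = Rpower k (1 - s) * exp ((s - 1) * (ln k - ln (k - 1)))).
  { unfold Rpower. rewrite <- exp_plus. f_equal. ring. }
  rewrite E2, E1.
  assert (H3 := exp_ineq1_le ((s - 1) * (ln k - ln (k - 1)))).
  assert (0 < Rpower k (- s)) by apply rp_pos.
  assert (1 + (s - 1) * (1 / k) <= exp ((s - 1) * (ln k - ln (k - 1)))).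
  { assert ((s-1) * (1/k) <= (s - 1) * (ln k - ln (k - 1))) by (apply Rmult_le_compat_l; lra). lra. }
  assert (k * Rpower k (- s) * (1 + (s - 1) * (1 / k)) = (s - 1) * Rpower k (- s) + k * Rpower k (- s)).
  { field. lra. }
  assert (0 < k * Rpower k (-s)) by (apply Rmult_lt_0_compat; lra).
  nra.
Qed.

Lemma zeta_partial_aux s N : 1 < s -> (1 <= N)%nat ->
  sumj (fun k => Rpower (INR k) (- s)) N + Rpower (INR N) (1 - s) / (s - 1) <= 1 + 1 / (s - 1).
Proof.
  intros Hs HN. induction HN.
  - simpl. rewrite !rp_one. lra.
  - cbn [sumj].
    assert (H2 : 2 <= INR (S m)) by (rewrite S_INR; apply le_INR in HN; simpl in HN; lra).
    assert (H := zeta_step s (INR (S m)) Hs H2).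
    replace (INR (S m) - 1) with (INR m) in H by (rewrite S_INR; ring).
    assert (Rpower (INR (S m)) (- s) + Rpower (INR (S m)) (1 - s) / (s - 1)
            <= Rpower (INR m) (1 - s) / (s - 1)).
    { apply (Rmult_le_reg_l (s - 1)). lra.
      replace ((s - 1) * (Rpower (INR (S m)) (- s) + Rpower (INR (S m)) (1 - s) / (s - 1)))
        with ((s - 1) * Rpower (INR (S m)) (- s) + Rpower (INR (S m)) (1 - s)) by (field; lra).
      replace ((s - 1) * (Rpower (INR m) (1 - s) / (s - 1))) with (Rpower (INR m) (1 - s)) by (field; lra).
      auto. }
    lra.
Qed.

Lemma zeta_partial s N : 1 < s -> sumj (fun k => Rpower (INR k) (- s)) N <= s / (s - 1).
Proof.
  intros Hs. destruct N. simpl. apply Rlt_le, Rdiv_lt_0_compat; lra.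
  assert (H := zeta_partial_aux s (S N) Hs ltac:(lia)).
  assert (0 < Rpower (INR (S N)) (1 - s) / (s - 1)) by (apply Rdiv_lt_0_compat; [apply rp_pos|lra]).
  replace (s / (s - 1)) with (1 + 1 / (s - 1)) by (field; lra). lra.
Qed.

Lemma series_bounded (a : nat -> R) M : (forall n, 0 <= a n) -> (forall n, sum_n a n <= M) ->
  ex_series a /\ Series a <= M.
Proof.
  intros Ha HM.
  assert (Hinc : forall n, sum_n a n <= sum_n a (S n)) by (intros; rewrite sum_Sn; simpl; specialize (Ha (S n)); unfold plus; simpl; lra).
  destruct (ex_finite_lim_seq_incr _ M Hinc HM) as [l Hl].
  assert (Hs : is_series a l) by exact Hl.
  split. exists l; auto.
  rewrite (is_series_unique a l Hs).
  assert (H := is_lim_seq_le (sum_n a) (fun _ => M) l M HM Hl (is_lim_seq_const M)). simpl in H. auto.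
Qed.

Lemma sum_n_nonneg (a : nat -> R) n : (forall n, 0 <= a n) -> 0 <= sum_n a n.
Proof.
  intros Ha. induction n. rewrite sum_O; auto. rewrite sum_Sn. unfold plus; simpl. specialize (Ha (S n)). lra.
Qed.

Lemma series_nonneg (a : nat -> R) : (forall n, 0 <= a n) -> ex_series a -> 0 <= Series a.
Proof.
  intros Ha Hex. assert (H := Series_correct a Hex).
  assert (H2 := is_lim_seq_le (fun _ => 0) (sum_n a) 0 (Series a) (fun n => sum_n_nonneg a n Ha) (is_lim_seq_const 0) H).
  simpl in H2. auto.
Qed.

Lemma series_ge_partial (a : nat -> R) n : (forall n, 0 <= a n) -> ex_series a -> sum_n a n <= Series a.
Proof.
  intros Ha Hex. rewrite (Series_incr_n a (S n)) by (auto; lia). simpl pred.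
  rewrite sum_n_Reals.
  assert (0 <= Series (fun k => a (S n + k)%nat)).
  { apply series_nonneg. intros; auto. apply ex_series_incr_n; auto. }
  lra.
Qed.

Lemma zt_pos s k : 0 < zt s k.
Proof. apply rp_pos. Qed.

Lemma zt_partial s n : sum_n (zt s) n = sumj (fun k => Rpower (INR k) (- s)) (S n).
Proof. rewrite sumj_sum_n. reflexivity. Qed.

Lemma zt_ex s : 1 < s -> ex_series (zt s) /\ Series (zt s) <= s / (s - 1).
Proof.
  intros Hs. apply series_bounded. intros; apply Rlt_le, zt_pos.
  intros n. rewrite zt_partial. apply zeta_partial; auto.
Qed.

Lemma zt_ge1 s : 1 < s -> 1 <= Series (zt s).
Proof.
  intros Hs. assert (H := series_ge_partial (zt s) 0 (fun k => Rlt_le _ _ (zt_pos s k)) (proj1 (zt_ex s Hs))).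
  rewrite sum_O in H. unfold zt in H. simpl INR in H. rewrite rp_one in H. auto.
Qed.

Lemma zt_mono s s' : 1 < s -> s <= s' -> Series (zt s') <= Series (zt s).
Proof.
  intros Hs Hss. apply Series_le. 2: apply zt_ex; auto.
  intros n. split. apply Rlt_le, zt_pos. unfold zt. apply rp_anti_exp; auto.
  rewrite S_INR. generalize (pos_INR n). lra.
Qed.

Lemma tail_cmp (a b : nat -> R) K : (0 < K)%nat -> (forall n, 0 <= a n) -> ex_series b ->
  (forall k, (K <= k)%nat -> a k <= b k) ->
  ex_series a /\ Series a - sum_n a (pred K) <= Series b - sum_n b (pred K).
Proof.
  intros HK Ha Hb Hab.
  assert (Hta : ex_series (fun k => a (K + k)%nat)).
  { apply (@ex_series_le R_AbsRing R_CompleteNormedModule _ (fun k => b (K + k)%nat)).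
    intros n. change (norm (a (K + n)%nat)) with (Rabs (a (K + n)%nat)). rewrite Rabs_pos_eq by auto. apply Hab; lia.
    apply ex_series_incr_n; auto. }
  assert (Hea : ex_series a) by (apply (ex_series_incr_n a K); auto).
  split; auto.
  rewrite (Series_incr_n a K), (Series_incr_n b K) by auto. rewrite !sum_n_Reals.
  assert (Series (fun k => a (K + k)%nat) <= Series (fun k => b (K + k)%nat)).
  { apply Series_le. intros; split; auto. apply Hab; lia. apply ex_series_incr_n; auto. }
  lra.
Qed.

Definition lsum (f : eig_idx -> R) (l : list eig_idx) : R :=
  fold_right (fun i acc => f i + acc) 0 l.

Lemma lsum_app f l1 l2 : lsum f (l1 ++ l2) = lsum f l1 + lsum f l2.
Proof. induction l1; simpl; [lra| rewrite IHl1; lra]. Qed.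

Lemma lsum_nonneg f l : (forall x, In x l -> 0 <= f x) -> 0 <= lsum f l.
Proof.
  induction l; simpl; intros H; [lra|].
  assert (0 <= f a) by auto. assert (0 <= lsum f l) by auto. lra.
Qed.

Lemma lsum_le f g l : (forall x, In x l -> f x <= g x) -> lsum f l <= lsum g l.
Proof.
  induction l; simpl; intros H; [lra|].
  assert (f a <= g a) by auto. assert (lsum f l <= lsum g l) by auto. lra.
Qed.

Lemma lsum_incl f S L : NoDup S -> incl S L -> (forall x, In x L -> 0 <= f x) ->
  lsum f S <= lsum f L.
Proof.
  revert L. induction S as [|x S IH]; intros L HN Hi Hf.
  - simpl. apply lsum_nonneg; auto.
  - inversion HN; subst.
    assert (Hx : In x L) by (apply Hi; simpl; auto).
    destruct (in_split x L Hx) as [L1 [L2 E]]. subst L.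
    assert (lsum f S <= lsum f (L1 ++ L2)).
    { apply IH; auto.
      - intros y Hy. assert (In y (L1 ++ x :: L2)) by (apply Hi; simpl; auto).
        apply in_app_iff in H. apply in_app_iff. destruct H as [H|[H|H]]; auto.
        subst; contradiction.
      - intros y Hy. apply Hf. apply in_app_iff in Hy. apply in_app_iff. simpl. tauto. }
    rewrite lsum_app in *. simpl. lra.
Qed.

Lemma lsum_const_lb f l m : (forall x, In x l -> m <= f x) -> INR (length l) * m <= lsum f l.
Proof.
  induction l; simpl length; intros H. simpl; lra.
  rewrite S_INR. simpl lsum. assert (m <= f a) by (apply H; simpl; auto).
  assert (INR (length l) * m <= lsum f l) by (apply IHl; intros; apply H; simpl; auto). lra.
Qed.

Lemma lsum_filter f (P : eig_idx -> bool) l :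
  lsum f l = lsum f (filter P l) + lsum f (filter (fun x => negb (P x)) l).
Proof.
  induction l; simpl; [lra|]. destruct (P a); simpl; rewrite IHl; lra.
Qed.

Definition idx_eq_dec : forall x y : eig_idx, {x = y} + {x <> y}.
Proof. repeat decide equality. Defined.

Fixpoint boxk (j K : nat) : list eig_idx :=
  match K with
  | O => nil
  | S K' => boxk j K' ++ (Some (j, S K', false) :: Some (j, S K', true) :: nil)
  end.

Fixpoint box (d K : nat) : list eig_idx :=
  match d with
  | O => nil
  | S d' => box d' K ++ boxk (S d') K
  end.

Lemma in_boxk i j K : In i (boxk j K) <-> exists k b, i = Some (j, k, b) /\ (1 <= k <= K)%nat.
Proof.
  induction K; simpl.
  - split; [tauto| intros [k [b [_ H]]]; lia].
  - rewrite in_app_iff, IHK. simpl. split.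
    + intros [[k [b [E H]]]|[E|[E|[]]]].
      * exists k, b; split; auto; lia.
      * exists (S K), false; split; auto; lia.
      * exists (S K), true; split; auto; lia.
    + intros [k [b [E H]]]. destruct (Nat.eq_dec k (S K)).
      * subst. destruct b; auto.
      * left. exists k, b; split; auto; lia.
Qed.

Lemma in_box i d K : In i (box d K) <->
  exists j k b, i = Some (j, k, b) /\ (1 <= j <= d)%nat /\ (1 <= k <= K)%nat.
Proof.
  induction d; simpl.
  - split; [tauto| intros [j [k [b [_ [H _]]]]]; lia].
  - rewrite in_app_iff, IHd, in_boxk. split.
    + intros [[j [k [b [E [H1 H2]]]]]|[k [b [E H]]]].
      * exists j, k, b; repeat split; auto; lia.
      * exists (S d), k, b; repeat split; auto; lia.
    + intros [j [k [b [E [H1 H2]]]]]. destruct (Nat.eq_dec j (S d)).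
      * subst. right. exists k, b; auto.
      * left. exists j, k, b; repeat split; auto; lia.
Qed.

Lemma nodup_boxk j K : NoDup (boxk j K).
Proof.
  induction K; simpl. constructor.
  apply NoDup_app; auto.
  - constructor. simpl. intros [H|[]]; discriminate. constructor. simpl; tauto. constructor.
  - intros a Ha Hb. apply in_boxk in Ha. destruct Ha as [k [b [E H]]]. subst.
    simpl in Hb. destruct Hb as [Hb|[Hb|[]]]; inversion Hb; lia.
Qed.

Lemma nodup_box d K : NoDup (box d K).
Proof.
  induction d; simpl. constructor.
  apply NoDup_app; auto. apply nodup_boxk.
  intros a Ha Hb. apply in_box in Ha. apply in_boxk in Hb.
  destruct Ha as [j [k [b [E [H1 H2]]]]]. destruct Hb as [k' [b' [E' H']]]. subst.
  inversion E'. lia.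
Qed.

Lemma len_boxk j K : length (boxk j K) = (2 * K)%nat.
Proof. induction K; simpl; auto. rewrite length_app, IHK. simpl. lia. Qed.

Lemma len_box d K : length (box d K) = (2 * d * K)%nat.
Proof. induction d; simpl; auto. rewrite length_app, IHd, len_boxk. lia. Qed.

Lemma lsum_boxk f j K :
  lsum f (boxk j K) = sumj (fun k => f (Some (j, k, false)) + f (Some (j, k, true))) K.
Proof. induction K; cbn [boxk sumj]. reflexivity. rewrite lsum_app, IHK. simpl. lra. Qed.

Lemma lsum_box f d K : lsum f (box d K) = sumj (fun j => lsum f (boxk j K)) d.
Proof. induction d; cbn [box sumj]. reflexivity. rewrite lsum_app, IHd. reflexivity. Qed.

Lemma valid_box d K : List.Forall (valid_idx d) (box d K).
Proof.
  apply Forall_forall. intros x Hx. apply in_box in Hx.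
  destruct Hx as [j [k [b [E [H1 H2]]]]]. subst. simpl. lia.
Qed.

Record Hyp (alpha beta sigma : nat -> R) (c : R) : Prop := {
  ha : forall j, (1 <= j)%nat -> 0 <= alpha j;
  hb1 : beta 1%nat <= 1;
  hbm : forall j, (1 <= j)%nat -> beta (S j) <= beta j;
  hbp : forall j, (1 <= j)%nat -> 0 < beta j;
  hs1 : 1 < sigma 1%nat;
  hsm : forall j, (1 <= j)%nat -> sigma j <= sigma (S j);
  hc : 0 < c;
  hac : forall j, (1 <= j)%nat -> alpha j <= c * beta j }.


Lemma beta_anti a b s c (H : Hyp a b s c) i j : (1 <= i <= j)%nat -> b j <= b i.
Proof.
  intros [H1 H2]. induction H2. lra.
  assert (b (S m) <= b m) by (apply (hbm _ _ _ _ H); lia). lra.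
Qed.

Lemma beta_le1 a b s c (H : Hyp a b s c) j : (1 <= j)%nat -> b j <= 1.
Proof. intros. assert (b j <= b 1%nat) by (apply (beta_anti _ _ _ _ H); lia). generalize (hb1 _ _ _ _ H); lra. Qed.

Lemma sigma_mono a b s c (H : Hyp a b s c) i j : (1 <= i <= j)%nat -> s i <= s j.
Proof.
  intros [H1 H2]. induction H2. lra.
  assert (s m <= s (S m)) by (apply (hsm _ _ _ _ H); lia). lra.
Qed.

Lemma sigma_ge a b s c (H : Hyp a b s c) j : (1 <= j)%nat -> s 1%nat <= s j.
Proof. intros. apply (sigma_mono _ _ _ _ H). lia. Qed.

Lemma sigma_gt1 a b s c (H : Hyp a b s c) j : (1 <= j)%nat -> 1 < s j.
Proof. intros. generalize (sigma_ge _ _ _ _ H j H0) (hs1 _ _ _ _ H). lra. Qed.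

Lemma sumalpha_nonneg a b s c (H : Hyp a b s c) d : 0 <= sumj a d.
Proof. apply sumj_nonneg. intros; apply (ha _ _ _ _ H); lia. Qed.

Lemma sumalpha_le a b s c (H : Hyp a b s c) d : sumj a d <= c * sumj b d.
Proof. rewrite <- sumj_scal. apply sumj_le. intros; apply (hac _ _ _ _ H); lia. Qed.

Lemma sumbeta_pos a b s c (H : Hyp a b s c) d : (1 <= d)%nat -> b 1%nat <= sumj b d.
Proof.
  intros Hd. induction Hd. simpl; lra. simpl.
  assert (0 < b (S m)) by (apply (hbp _ _ _ _ H); lia). lra.
Qed.

Lemma eig_nonneg a b s c (H : Hyp a b s c) d i : valid_idx d i -> 0 <= eig a b s d i.
Proof.
  destruct i as [[[j k] bb]|]; simpl; intros Hv.
  - apply Rmult_le_pos. apply Rlt_le, (hbp _ _ _ _ H); lia. apply Rlt_le, rp_pos.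
  - apply (sumalpha_nonneg _ _ _ _ H).
Qed.

Lemma eig_le1 a b s c (H : Hyp a b s c) d j k bb : valid_idx d (Some (j, k, bb)) ->
  eig a b s d (Some (j, k, bb)) <= 1.
Proof.
  simpl; intros Hv.
  assert (b j <= 1) by (apply (beta_le1 _ _ _ _ H); lia).
  assert (0 < b j) by (apply (hbp _ _ _ _ H); lia).
  assert (Rpower (INR k) (- s j) <= 1).
  { apply rp_le1. lia. generalize (sigma_gt1 _ _ _ _ H j ltac:(lia)); lra. }
  assert (0 < Rpower (INR k) (- s j)) by apply rp_pos. nra.
Qed.

Definition zeta (s : R) := Series (zt s).

Lemma total_eq a b s d : total a b s d = sumj a d + 2 * sumj (fun j => b j * zeta (s j)) d.
Proof. reflexivity. Qed.

Lemma total_ge a b s c (H : Hyp a b s c) d : sumj a d + 2 * sumj b d <= total a b s d.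
Proof.
  rewrite total_eq. assert (sumj b d <= sumj (fun j => b j * zeta (s j)) d).
  { apply sumj_le. intros j Hj.
    assert (1 <= zeta (s j)) by (apply zt_ge1, (sigma_gt1 _ _ _ _ H); lia).
    assert (0 < b j) by (apply (hbp _ _ _ _ H); lia). nra. }
  lra.
Qed.

Lemma total_ge_b1 a b s c (H : Hyp a b s c) d : (1 <= d)%nat -> 2 * b 1%nat <= total a b s d.
Proof.
  intros Hd. generalize (total_ge _ _ _ _ H d) (sumalpha_nonneg _ _ _ _ H d) (sumbeta_pos _ _ _ _ H d Hd). lra.
Qed.

Lemma total_pos a b s c (H : Hyp a b s c) d : (1 <= d)%nat -> 0 < total a b s d.
Proof. intros Hd. generalize (total_ge_b1 _ _ _ _ H d Hd) (hbp _ _ _ _ H 1%nat (le_n _)). lra. Qed.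

Lemma total_le a b s c (H : Hyp a b s c) d :
  total a b s d <= (c + 2 * (s 1%nat / (s 1%nat - 1))) * sumj b d.
Proof.
  rewrite total_eq. set (Z := s 1%nat / (s 1%nat - 1)).
  assert (sumj (fun j => b j * zeta (s j)) d <= Z * sumj b d).
  { rewrite <- sumj_scal. apply sumj_le. intros j Hj.
    assert (zeta (s j) <= Z).
    { unfold zeta. apply Rle_trans with (Series (zt (s 1%nat))).
      apply zt_mono. apply (hs1 _ _ _ _ H). apply (sigma_ge _ _ _ _ H); lia.
      apply zt_ex, (hs1 _ _ _ _ H). }
    assert (0 < b j) by (apply (hbp _ _ _ _ H); lia). nra. }
  generalize (sumalpha_le _ _ _ _ H d). lra.
Qed.

Lemma psum_le_zeta s K : 1 < s -> sumj (fun k => Rpower (INR k) (- s)) K <= zeta s.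
Proof.
  intros Hs. destruct K.
  - simpl. apply series_nonneg. intros; apply Rlt_le, zt_pos. apply zt_ex; auto.
  - rewrite sumj_sum_n. apply series_ge_partial. intros; apply Rlt_le, zt_pos. apply zt_ex; auto.
Qed.

Lemma bound_k (S : list eig_idx) : exists K, forall j k bb, In (Some (j, k, bb)) S -> (k <= K)%nat.
Proof.
  induction S as [|x S [K HK]]. exists O; simpl; tauto.
  destruct x as [[[j0 k0] b0]|].
  - exists (Nat.max k0 K). intros j k bb [E|Hin]. inversion E; lia. specialize (HK _ _ _ Hin); lia.
  - exists K. intros j k bb [E|Hin]. discriminate. eauto.
Qed.

Lemma lsum_box_eig a b s c (H : Hyp a b s c) d K :
  lsum (eig a b s d) (box d K) <= 2 * sumj (fun j => b j * zeta (s j)) d.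
Proof.
  rewrite lsum_box, <- sumj_scal. apply sumj_le. intros j Hj. rewrite lsum_boxk. simpl.
  replace (sumj (fun k => b j * Rpower (INR k) (- s j) + b j * Rpower (INR k) (- s j)) K)
    with (2 * b j * sumj (fun k => Rpower (INR k) (- s j)) K)
    by (rewrite <- sumj_scal; apply sumj_ext; intros; ring).
  assert (sumj (fun k => Rpower (INR k) (- s j)) K <= zeta (s j))
    by (apply psum_le_zeta, (sigma_gt1 _ _ _ _ H); lia).
  assert (0 < b j) by (apply (hbp _ _ _ _ H); lia). nra.
Qed.

Lemma subset_le_total a b s c (H : Hyp a b s c) d S :
  NoDup S -> List.Forall (valid_idx d) S -> subset_sum a b s d S <= total a b s d.
Proof.
  intros HN HV. destruct (bound_k S) as [K HK].
  change (subset_sum a b s d S) with (lsum (eig a b s d) S).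
  apply Rle_trans with (lsum (eig a b s d) (None :: box d K)).
  - apply lsum_incl; auto.
    + intros x Hx. rewrite List.Forall_forall in HV. specialize (HV x Hx).
      destruct x as [[[j k] bb]|]. right. apply in_box. exists j, k, bb.
      simpl in HV. specialize (HK _ _ _ Hx). repeat split; auto; lia.
      left; auto.
    + intros x [E|Hx]. subst; apply (eig_nonneg _ _ _ _ H); simpl; auto.
      apply (eig_nonneg _ _ _ _ H). apply in_box in Hx.
      destruct Hx as [j [k [bb [E [H1 H2]]]]]. subst; simpl; lia.
  - simpl. rewrite total_eq. generalize (lsum_box_eig _ _ _ _ H d K). lra.
Qed.

Lemma lub_real (E : R -> Prop) x0 M : E x0 -> (forall x, E x -> x <= M) ->
  (forall x, E x -> x <= real (Lub_Rbar E)) /\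
  (forall M', (forall x, E x -> x <= M') -> real (Lub_Rbar E) <= M').
Proof.
  intros H0 HM. destruct (Lub_Rbar_correct E) as [Hub Hlub].
  assert (HlM := Hlub (Finite M) HM).
  assert (Hl0 := Hub x0 H0).
  destruct (Lub_Rbar E) as [l| |]; simpl in *; try contradiction.
  split. intros x Hx. apply (Hub x Hx).
  intros M' HM'. apply (Hlub (Finite M') HM').
Qed.

Definition adm a b s d n (x : R) := exists S : list eig_idx,
  NoDup S /\ List.Forall (valid_idx d) S /\ (length S <= n)%nat /\ x = subset_sum a b s d S.

Lemma top_eq a b s d n : top_sum a b s d n = real (Lub_Rbar (adm a b s d n)).
Proof. reflexivity. Qed.

Lemma top_spec a b s c (H : Hyp a b s c) d n :
  (forall S, NoDup S -> List.Forall (valid_idx d) S -> (length S <= n)%nat ->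
     subset_sum a b s d S <= top_sum a b s d n) /\
  (forall M', (forall S, NoDup S -> List.Forall (valid_idx d) S -> (length S <= n)%nat ->
     subset_sum a b s d S <= M') -> top_sum a b s d n <= M').
Proof.
  rewrite top_eq.
  destruct (lub_real (adm a b s d n) 0 (total a b s d)) as [H1 H2].
  - exists nil. split. constructor. split. constructor. split; simpl; auto. lia.
  - intros x [S [HN [HV [HL E]]]]. subst. apply (subset_le_total _ _ _ _ H); auto.
  - split.
    + intros S HN HV HL. apply H1. exists S; auto.
    + intros M' HM'. apply H2. intros x [S [HN [HV [HL E]]]]. subst; auto.
Qed.

Lemma top_le_total a b s c (H : Hyp a b s c) d n : top_sum a b s d n <= total a b s d.
Proof. apply (top_spec _ _ _ _ H). intros; apply (subset_le_total _ _ _ _ H); auto. Qed.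

Lemma top_ge a b s c (H : Hyp a b s c) d n S : NoDup S -> List.Forall (valid_idx d) S ->
  (length S <= n)%nat -> subset_sum a b s d S <= top_sum a b s d n.
Proof. apply (top_spec _ _ _ _ H). Qed.

Lemma top_0 a b s c (H : Hyp a b s c) d : top_sum a b s d 0 = 0.
Proof.
  apply Rle_antisym.
  - apply (top_spec _ _ _ _ H). intros S _ _ HL. destruct S; simpl in *. lra. lia.
  - change 0 with (subset_sum a b s d nil). apply (top_ge _ _ _ _ H); auto; constructor.
Qed.

Lemma err2_nonneg a b s c (H : Hyp a b s c) d n : 0 <= err2 a b s d n.
Proof. unfold err2. generalize (top_le_total _ _ _ _ H d n). lra. Qed.

Lemma err0 a b s c (H : Hyp a b s c) d : err a b s d 0 = sqrt (total a b s d).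
Proof. unfold err, err2. rewrite (top_0 _ _ _ _ H). f_equal; ring. Qed.

Lemma nor_err2 a b s c (H : Hyp a b s c) d n eps : (1 <= d)%nat -> 0 < eps ->
  err a b s d n <= eps * err a b s d 0 -> err2 a b s d n <= eps ^ 2 * total a b s d.
Proof.
  intros Hd He. rewrite (err0 _ _ _ _ H). unfold err. intros Hle.
  assert (E0 := err2_nonneg _ _ _ _ H d n). assert (T0 := total_pos _ _ _ _ H d Hd).
  assert (S1 := sqrt_sqrt _ E0). assert (S2 := sqrt_sqrt _ (Rlt_le _ _ T0)).
  assert (0 <= sqrt (err2 a b s d n)) by apply sqrt_pos.
  rewrite <- S1. replace (eps ^ 2 * total a b s d) with ((eps * sqrt (total a b s d)) * (eps * sqrt (total a b s d))) by (rewrite <- S2 at 3; ring).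
  apply Rmult_le_compat; auto.
Qed.

Lemma err2_nor a b s c (H : Hyp a b s c) d n eps : (1 <= d)%nat -> 0 < eps ->
  err2 a b s d n <= eps ^ 2 * total a b s d -> err a b s d n <= eps * err a b s d 0.
Proof.
  intros Hd He Hle. rewrite (err0 _ _ _ _ H). unfold err.
  assert (T0 := total_pos _ _ _ _ H d Hd).
  replace (eps * sqrt (total a b s d)) with (sqrt (eps ^ 2 * total a b s d)).
  apply sqrt_le_1_alt; auto.
  rewrite sqrt_mult by (try apply pow2_ge_0; lra). f_equal. rewrite sqrt_pow2; lra.
Qed.

Lemma top_le_box a b s c (H : Hyp a b s c) d n B m :
  NoDup B -> List.Forall (valid_idx d) B -> (forall x, In x B -> m <= eig a b s d x) -> 0 <= m ->
  top_sum a b s d n <= total a b s d - (INR (length B) - INR n) * m.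
Proof.
  intros HNB HVB HmB Hm. apply (top_spec _ _ _ _ H). intros S HN HV HL.
  set (P := fun x => if in_dec idx_eq_dec x S then false else true).
  set (F := filter P B).
  set (G := filter (fun x => negb (P x)) B).
  assert (HF : NoDup F) by (apply NoDup_filter; auto).
  assert (Hdisj : forall x, In x S -> ~ In x F).
  { intros x Hx HxF. unfold F in HxF. apply filter_In in HxF. destruct HxF as [_ Hp].
    unfold P in Hp. destruct (in_dec idx_eq_dec x S); [discriminate|contradiction]. }
  assert (HSF : subset_sum a b s d (S ++ F) <= total a b s d).
  { apply (subset_le_total _ _ _ _ H). apply NoDup_app; auto.
    apply List.Forall_app; split; auto. unfold F.
    rewrite List.Forall_forall in *. intros x Hx. apply filter_In in Hx. apply HVB; tauto. }
  change (subset_sum a b s d (S ++ F)) with (lsum (eig a b s d) (S ++ F)) in HSF.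
  rewrite lsum_app in HSF.
  assert (HFm : INR (length F) * m <= lsum (eig a b s d) F).
  { apply lsum_const_lb. intros x Hx. apply filter_In in Hx. apply HmB; tauto. }
  assert (HG : (length G <= length S)%nat).
  { apply NoDup_incl_length. apply NoDup_filter; auto.
    intros x Hx. unfold G in Hx. apply filter_In in Hx. destruct Hx as [_ Hp].
    unfold P in Hp. destruct (in_dec idx_eq_dec x S); auto. discriminate. }
  assert (HFG := filter_length P B). fold F G in HFG.
  assert (INR (length B) - INR n <= INR (length F)).
  { rewrite <- HFG, plus_INR. apply le_INR in HG. apply le_INR in HL. lra. }
  assert ((INR (length B) - INR n) * m <= INR (length F) * m) by (apply Rmult_le_compat_r; auto).
  change (subset_sum a b s d S) with (lsum (eig a b s d) S). lra.
Qed.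

Lemma lsum_noNone a b s c (H : Hyp a b s c) d S : List.Forall (valid_idx d) S -> ~ In None S ->
  lsum (eig a b s d) S <= INR (length S).
Proof.
  induction S as [|x S IH]; intros HV HN. simpl; lra.
  inversion HV; subst. simpl length. rewrite S_INR. simpl lsum.
  destruct x as [[[j k] bb]|]. 2: (exfalso; apply HN; simpl; auto).
  assert (eig a b s d (Some (j, k, bb)) <= 1) by (apply (eig_le1 _ _ _ _ H); auto).
  assert (lsum (eig a b s d) S <= INR (length S)) by (apply IH; auto; intros Hc; apply HN; simpl; auto).
  lra.
Qed.

Lemma top_le_alpha a b s c (H : Hyp a b s c) d n : top_sum a b s d n <= sumj a d + INR n.
Proof.
  apply (top_spec _ _ _ _ H). intros S HN HV HL.
  change (subset_sum a b s d S) with (lsum (eig a b s d) S).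
  apply le_INR in HL.
  destruct (in_dec idx_eq_dec None S) as [Hin|Hnin].
  - destruct (in_split _ _ Hin) as [S1 [S2 E]]. subst S.
    apply NoDup_remove_2 in HN.
    rewrite lsum_app. simpl lsum.
    assert (HV' : List.Forall (valid_idx d) (S1 ++ S2)).
    { rewrite List.Forall_forall in *. intros x Hx. apply HV. apply in_app_iff in Hx; apply in_app_iff; simpl; tauto. }
    assert (lsum (eig a b s d) (S1 ++ S2) <= INR (length (S1 ++ S2))) by (apply (lsum_noNone _ _ _ _ H); auto).
    rewrite lsum_app in H0. rewrite length_app in *. simpl length in HL.
    rewrite Nat.add_succ_r, S_INR in HL. lra.
  - assert (lsum (eig a b s d) S <= INR (length S)) by (apply (lsum_noNone _ _ _ _ H); auto).
    generalize (sumalpha_nonneg _ _ _ _ H d). lra.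
Qed.

Lemma nat_large X : exists N : nat, X < INR N.
Proof.
  destruct (archimed X) as [H1 H2].
  destruct (Z_lt_le_dec (up X) 0) as [Hn|Hp].
  - exists O. simpl. apply IZR_lt in Hn. lra.
  - exists (Z.to_nat (up X)). rewrite INR_IZR_INZ, Z2Nat.id by auto. lra.
Qed.

Lemma nnor_err2 a b s c (H : Hyp a b s c) d eps n : (1 <= d)%nat -> 0 < eps ->
  is_nNOR a b s d eps n -> err2 a b s d n <= eps ^ 2 * total a b s d.
Proof. intros Hd He [Hn _]. apply (nor_err2 _ _ _ _ H); auto. Qed.

Lemma nnor_pos a b s c (H : Hyp a b s c) d eps n : (1 <= d)%nat -> 0 < eps < 1 ->
  is_nNOR a b s d eps n -> (1 <= n)%nat.
Proof.
  intros Hd He Hn. destruct n; [|lia]. exfalso.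
  assert (E := nnor_err2 _ _ _ _ H d eps 0 Hd (proj1 He) Hn).
  unfold err2 in E. rewrite (top_0 _ _ _ _ H) in E.
  assert (T0 := total_pos _ _ _ _ H d Hd).
  assert (eps ^ 2 < 1) by (simpl; nra). nra.
Qed.

Lemma eig_box_lb a b s c (H : Hyp a b s c) d K x : In x (box d K) ->
  b d * Rpower (INR K) (- s d) <= eig a b s d x.
Proof.
  intros Hx. apply in_box in Hx. destruct Hx as [j [k [bb [E [H1 H2]]]]]. subst x. simpl.
  assert (b d <= b j) by (apply (beta_anti _ _ _ _ H); lia).
  assert (0 < b d) by (apply (hbp _ _ _ _ H); lia).
  assert (s j <= s d) by (apply (sigma_mono _ _ _ _ H); lia).
  assert (1 < s j) by (apply (sigma_gt1 _ _ _ _ H); lia).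
  assert (Rpower (INR K) (- s d) <= Rpower (INR k) (- s j)).
  { unfold Rpower. apply exp_le'.
    assert (0 <= ln (INR k)) by (apply ln_INR_ge0; lia).
    assert (ln (INR k) <= ln (INR K)) by (apply ln_le'; [apply lt_0_INR; lia| apply le_INR; lia]).
    nra. }
  assert (0 < Rpower (INR K) (- s d)) by apply rp_pos. nra.
Qed.

Lemma spt_p_sigma a b s c (H : Hyp a b s c) p : SPT_with a b s p -> 2 <= p * (s 1%nat - 1).
Proof.
  intros [Hp [C [HC Hall]]].
  destruct (Rle_or_lt 2 (p * (s 1%nat - 1))) as [ok|Hlt]; auto. exfalso.
  set (g := 2 - p * (s 1%nat - 1)).
  assert (Hg : 0 < g) by (unfold g; lra).
  set (T1 := total a b s 1).
  assert (HT1 : 0 < T1) by (apply (total_pos _ _ _ _ H); lia).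
  assert (Hb1 : 0 < b 1%nat) by (apply (hbp _ _ _ _ H); lia).
  set (s1 := s 1%nat).
  assert (Hs1 : 1 < s1) by apply (hs1 _ _ _ _ H).
  assert (Key : forall eps, 0 < eps < 1 ->
            0 < C /\ ln (b 1%nat) - ln T1 <= (s1 - 1) * ln C + g * ln eps).
  { intros eps He. destruct (Hall 1%nat eps (le_n _) He) as [n [Hn HnC]].
    assert (Hn1 := nnor_pos _ _ _ _ H 1 eps n (le_n _) He Hn).
    assert (E2 := nnor_err2 _ _ _ _ H 1 eps n (le_n _) (proj1 He) Hn).
    assert (HB := top_le_box _ _ _ _ H 1 n (box 1 n) (b 1%nat * Rpower (INR n) (- s 1%nat))
                   (nodup_box _ _) (valid_box _ _) (eig_box_lb _ _ _ _ H 1 n)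
                   ltac:(apply Rlt_le, Rmult_lt_0_compat; auto; apply rp_pos)).
    rewrite len_box in HB. unfold err2 in E2. fold T1 in E2, HB.
    replace (INR (2 * 1 * n)) with (2 * INR n) in HB by (rewrite mult_INR; simpl; ring).
    assert (Hn0 : 1 <= INR n) by (apply le_INR in Hn1; auto).
    assert (Hpos : 0 < Rpower eps (- p)) by apply rp_pos.
    assert (HCp : 0 < C).
    { destruct (Rle_or_lt C 0); auto. assert (C * Rpower eps (-p) <= 0) by nra. lra. }
    split; auto.
    assert (Hm : INR n * (b 1%nat * Rpower (INR n) (- s1)) <= eps ^ 2 * T1) by (fold s1 in HB; lra).
    assert (Hl : ln (INR n * (b 1%nat * Rpower (INR n) (- s1))) <= ln (eps ^ 2 * T1)).
    { apply ln_le'; auto. apply Rmult_lt_0_compat; [lra| apply Rmult_lt_0_compat; auto; apply rp_pos]. }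
    rewrite !ln_mult in Hl by (try apply Rmult_lt_0_compat; try apply rp_pos; try apply pow_lt; lra).
    unfold Rpower in Hl. rewrite ln_exp in Hl. simpl in Hl. rewrite Rmult_1_r in Hl.
    rewrite ln_mult in Hl by lra.
    assert (Hl2 : ln (INR n) <= ln (C * Rpower eps (- p))) by (apply ln_le'; auto; lra).
    rewrite ln_mult in Hl2 by auto. unfold Rpower in Hl2. rewrite ln_exp in Hl2.
    assert (0 <= s1 - 1) by lra.
    assert ((s1 - 1) * ln (INR n) <= (s1 - 1) * (ln C + - p * ln eps)) by (apply Rmult_le_compat_l; auto).
    unfold g; fold s1. nra. }
  destruct (Key (/2) ltac:(lra)) as [HC0 _].
  set (X := ((s1 - 1) * ln C - (ln (b 1%nat) - ln T1) + 1) / g).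
  set (Y := Rmax 1 X).
  set (eps := exp (- Y)).
  assert (He : 0 < eps < 1).
  { split. apply exp_pos. unfold eps. rewrite <- exp_0. apply exp_increasing.
    generalize (Rmax_l 1 X); fold Y; lra. }
  destruct (Key eps He) as [_ K2]. unfold eps in K2. rewrite ln_exp in K2.
  assert (X <= Y) by apply Rmax_r.
  assert (g * X = (s1 - 1) * ln C - (ln (b 1%nat) - ln T1) + 1) by (unfold X; field; lra).
  assert (g * X <= g * Y) by (apply Rmult_le_compat_l; lra).
  nra.
Qed.

Lemma spt_C_pos a b s c (H : Hyp a b s c) p C :
  (forall (d : nat) (eps : R), (1 <= d)%nat -> 0 < eps < 1 ->
      exists n : nat, is_nNOR a b s d eps n /\ INR n <= C * Rpower eps (- p)) -> 0 < C.
Proof.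
  intros Hall. destruct (Hall 1%nat (/2) (le_n _) ltac:(lra)) as [n [Hn HnC]].
  assert (Hn1 := nnor_pos _ _ _ _ H 1 (/2) n (le_n _) ltac:(lra) Hn).
  apply le_INR in Hn1. simpl in Hn1.
  assert (0 < Rpower (/2) (- p)) by apply rp_pos.
  destruct (Rle_or_lt C 0); auto. assert (C * Rpower (/2) (-p) <= 0) by nra. lra.
Qed.

Lemma spt_astar a b s c (H : Hyp a b s c) p :
  SPT_with a b s p -> 0 < p -> Rbar_le (Finite (1 + 2 / p)) (Astar b).
Proof.
  intros [Hp0 [C [HC Hall]]] Hp.
  assert (HC0 := spt_C_pos _ _ _ _ H p C Hall).
  assert (Hc := hc _ _ _ _ H).
  assert (Hs1 := hs1 _ _ _ _ H).
  set (e0 := / sqrt (2 + c)).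
  assert (Hsq : 1 < sqrt (2 + c)).
  { rewrite <- sqrt_1. apply sqrt_lt_1_alt. lra. }
  assert (He0 : 0 < e0 < 1).
  { unfold e0. split. apply Rinv_0_lt_compat; lra. rewrite <- Rinv_1. apply Rinv_lt_contravar; lra. }
  assert (He0sq : e0 ^ 2 * (2 + c) = 1).
  { unfold e0. simpl. rewrite Rmult_1_r, <- Rinv_mult, sqrt_sqrt by lra. field. lra. }
  set (N0 := C * Rpower e0 (- p)).
  assert (HS : forall d, (1 <= d)%nat -> sumj b d <= N0).
  { intros d Hd. destruct (Hall d e0 Hd He0) as [n [Hn HnC]].
    assert (E2 := nnor_err2 _ _ _ _ H d e0 n Hd (proj1 He0) Hn). unfold err2 in E2.
    assert (HA := top_le_alpha _ _ _ _ H d n).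
    assert (HT := total_ge _ _ _ _ H d).
    assert (Hac := sumalpha_le _ _ _ _ H d).
    assert (Ha0 := sumalpha_nonneg _ _ _ _ H d).
    set (e := e0 ^ 2) in *.
    assert (He : 0 < e < 1) by (unfold e; simpl; nra).
    set (A := sumj a d) in *. set (Bs := sumj b d) in *. set (T := total a b s d) in *.
    assert (H1 : (1 - e) * (A + 2 * Bs) <= (1 - e) * T) by (apply Rmult_le_compat_l; lra).
    assert (H2 : e * A <= e * (c * Bs)) by (apply Rmult_le_compat_l; lra).
    assert (H3 : e * (c * Bs) = Bs - 2 * e * Bs).
    { replace (Bs - 2 * e * Bs) with ((e * (2 + c)) * Bs - 2 * e * Bs) by (rewrite He0sq; ring). ring. }
    unfold N0. lra. }
  set (Z := s 1%nat / (s 1%nat - 1)).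
  assert (HZ : 0 < Z) by (apply Rdiv_lt_0_compat; lra).
  set (K1 := (c + 2 * Z) * N0).
  assert (HT : forall d, (1 <= d)%nat -> total a b s d <= K1).
  { intros d Hd. apply Rle_trans with ((c + 2 * Z) * sumj b d). apply (total_le _ _ _ _ H).
    apply Rmult_le_compat_l. lra. auto. }
  assert (HK1 : 0 < K1).
  { generalize (HT 1%nat (le_n _)) (total_pos _ _ _ _ H 1%nat (le_n _)). lra. }
  assert (Hbd : forall d, (1 <= d)%nat -> C < INR d ->
            ln (INR d) + ln (b d) <= ln K1 + (2 / p) * (ln C - ln (INR d))).
  { intros d Hd HCd.
    assert (Hd0 : 0 < INR d) by lra.
    assert (HlnC : ln C < ln (INR d)) by (apply ln_increasing; auto).
    set (eps := exp ((1 / p) * (ln C - ln (INR d)))).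
    assert (He : 0 < eps < 1).
    { split. apply exp_pos. unfold eps.
      assert (0 < 1 / p) by (apply Rdiv_lt_0_compat; lra).
      assert (0 < 1 / p * (ln (INR d) - ln C)) by (apply Rmult_lt_0_compat; lra).
      assert (HX : 1 / p * (ln C - ln (INR d)) < 0) by (replace (1 / p * (ln C - ln (INR d))) with (- (1 / p * (ln (INR d) - ln C))) by ring; lra).
      generalize (exp_increasing _ _ HX). rewrite exp_0. auto. }
    destruct (Hall d eps Hd He) as [n [Hn HnC]].
    assert (Hnd : INR n <= INR d).
    { replace (C * Rpower eps (- p)) with (INR d) in HnC; auto.
      unfold Rpower, eps. rewrite ln_exp.
      replace (- p * (1 / p * (ln C - ln (INR d)))) with (ln (INR d) + - ln C) by (field; lra).
      rewrite exp_plus, exp_Ropp, !exp_ln by lra. field. lra. }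
    assert (E2 := nnor_err2 _ _ _ _ H d eps n Hd (proj1 He) Hn). unfold err2 in E2.
    assert (Hbp : 0 < b d) by (apply (hbp _ _ _ _ H); auto).
    assert (HB := top_le_box _ _ _ _ H d n (box d 1) (b d * Rpower (INR 1) (- s d))
                   (nodup_box _ _) (valid_box _ _) (eig_box_lb _ _ _ _ H d 1)
                   ltac:(apply Rlt_le, Rmult_lt_0_compat; auto; apply rp_pos)).
    rewrite len_box in HB. replace (INR 1) with 1 in HB by reflexivity. rewrite rp_one, Rmult_1_r in HB.
    replace (INR (2 * d * 1)) with (2 * INR d) in HB by (rewrite !mult_INR; simpl; ring).
    assert (HTd := HT d Hd).
    assert (Hdb : INR d * b d <= eps ^ 2 * K1).
    { assert (eps ^ 2 * total a b s d <= eps ^ 2 * K1) by (apply Rmult_le_compat_l; auto; apply pow2_ge_0).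
      assert (INR d * b d <= (2 * INR d - INR n) * b d) by (apply Rmult_le_compat_r; lra).
      lra. }
    assert (Hl : ln (INR d * b d) <= ln (eps ^ 2 * K1)).
    { apply ln_le'; auto. apply Rmult_lt_0_compat; auto. }
    rewrite !ln_mult in Hl by (try apply pow_lt; lra).
    unfold eps in Hl. simpl in Hl. rewrite Rmult_1_r, ln_mult, ln_exp in Hl by apply exp_pos.
    replace (2 / p * (ln C - ln (INR d))) with (1 / p * (ln C - ln (INR d)) + 1 / p * (ln C - ln (INR d))) by (field; lra).
    lra. }
  set (K3 := ln K1 + (2 / p) * ln C).
  set (u := fun d => ln (1 / b d) / ln (INR d)).
  assert (Claim : forall e, 0 < e -> exists N, forall n, (N <= n)%nat -> 1 + 2 / p - e < u n).
  { intros e He.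
    destruct (nat_large (Rmax (Rmax C 1) (exp (Rabs K3 / e)))) as [N HN].
    exists N. intros n Hn. apply le_INR in Hn.
    assert (HnC : C < INR n) by (generalize (Rmax_l (Rmax C 1) (exp (Rabs K3 / e))) (Rmax_l C 1); lra).
    assert (Hn1 : 1 < INR n) by (generalize (Rmax_l (Rmax C 1) (exp (Rabs K3 / e))) (Rmax_r C 1); lra).
    assert (Hnexp : exp (Rabs K3 / e) < INR n) by (generalize (Rmax_r (Rmax C 1) (exp (Rabs K3 / e))); lra).
    assert (Hn1' : (1 <= n)%nat).
    { destruct n. simpl in Hn1; lra. lia. }
    assert (Hlnn : Rabs K3 / e < ln (INR n)).
    { rewrite <- (ln_exp (Rabs K3 / e)). apply ln_increasing; auto. apply exp_pos. }
    assert (HK3e : Rabs K3 < e * ln (INR n)).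
    { apply (Rmult_lt_compat_l e) in Hlnn; auto. replace (e * (Rabs K3 / e)) with (Rabs K3) in Hlnn by (field; lra). lra. }
    assert (Hln0 : 0 < ln (INR n)) by (rewrite <- ln_1; apply ln_increasing; lra).
    assert (Hb := Hbd n Hn1' HnC).
    assert (Hbp : 0 < b n) by (apply (hbp _ _ _ _ H); auto).
    unfold u.
    replace (ln (1 / b n)) with (- ln (b n)) by (unfold Rdiv; rewrite Rmult_1_l, ln_Rinv; auto).
    replace (- ln (b n) / ln (INR n)) with (- ln (b n) * / ln (INR n)) by reflexivity.
    apply (Rmult_lt_reg_r (ln (INR n))); auto.
    rewrite Rmult_assoc, Rinv_l, Rmult_1_r by lra.
    replace ((1 + 2 / p - e) * ln (INR n)) with (ln (INR n) + 2 / p * ln (INR n) - e * ln (INR n)) by ring.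
    generalize (Rle_abs K3). unfold K3 in *.
    replace (2 / p * (ln C - ln (INR n))) with (2 / p * ln C - 2 / p * ln (INR n)) in Hb by ring.
    lra. }
  unfold Astar. fold u.
  destruct (ex_LimInf_seq u) as [l Hl]. rewrite (is_LimInf_seq_unique _ _ Hl).
  destruct l as [r| |]; simpl.
  - destruct (Rle_or_lt (1 + 2 / p) r) as [ok|Hlt]; auto. exfalso.
    assert (Hep : 0 < (1 + 2 / p - r) / 2) by lra.
    destruct (Hl (mkposreal _ Hep)) as [Hfreq _]. simpl in Hfreq.
    destruct (Claim _ Hep) as [N HN]. destruct (Hfreq N) as [n [Hn Hu]].
    specialize (HN n Hn). lra.
  - auto.
  - destruct (Claim 1 ltac:(lra)) as [N HN]. destruct (Hl (1 + 2 / p - 1) N) as [n [Hn Hu]].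
    specialize (HN n Hn). lra.
Qed.

Lemma ex_min (P : nat -> Prop) n : P n ->
  exists m, (m <= n)%nat /\ P m /\ forall k, (k < m)%nat -> ~ P k.
Proof.
  induction n as [n IH] using lt_wf_ind. intros Hn.
  destruct (classic (exists k, (k < n)%nat /\ P k)) as [[k [Hk Pk]]|Hno].
  - destruct (IH k Hk Pk) as [m [Hm [Pm Hmin]]]. exists m. repeat split; auto. lia.
  - exists n. repeat split; auto. intros k Hk Pk. apply Hno; eauto.
Qed.

Lemma rp_ge_t t x r : 0 < t <= x -> 0 < r -> 1 <= Rpower t (- r) * Rpower x r.
Proof.
  intros [Ht Hx] Hr. unfold Rpower. rewrite <- exp_plus, <- exp_0. apply exp_le'.
  assert (ln t <= ln x) by (apply ln_le'; lra). nra.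
Qed.

Lemma rp_lt_t t x r : 0 < x < t -> 0 < r < 1 -> x <= Rpower t (1 - r) * Rpower x r.
Proof.
  intros [Hx Ht] Hr. unfold Rpower. rewrite <- exp_plus. rewrite <- (exp_ln x) at 1 by auto.
  apply exp_le'. assert (ln x <= ln t) by (apply ln_le'; lra). nra.
Qed.

Lemma rp_prod x y r : 0 < x -> 0 < y -> Rpower (x * y) r = Rpower x r * Rpower y r.
Proof. intros. rewrite Rpower_mult_distr; auto. Qed.

Lemma lsum_scal f a l : lsum (fun x => a * f x) l = a * lsum f l.
Proof. induction l; simpl; [ring| rewrite IHl; ring]. Qed.

Lemma sum_n_scal_R (c : R) (a : nat -> R) n : sum_n (fun k => c * a k) n = c * sum_n a n.
Proof. apply (sum_n_mult_l c a n). Qed.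

Definition eigr (b s : nat -> R) (r : R) (i : eig_idx) : R :=
  match i with
  | None => 0
  | Some (j, k, _) => Rpower (b j) r * Rpower (INR k) (- (r * s j))
  end.

Lemma eigr_eq a b s c (H : Hyp a b s c) d r i : In i (box d 1) \/ True ->
  forall j k bb, i = Some (j, k, bb) -> (1 <= j)%nat -> (1 <= k)%nat ->
  Rpower (eig a b s d i) r = eigr b s r i.
Proof.
  intros _ j k bb E Hj Hk. subst. simpl.
  assert (0 < b j) by (apply (hbp _ _ _ _ H); auto).
  rewrite rp_prod by (auto; apply rp_pos). rewrite Rpower_mult. f_equal. f_equal. ring.
Qed.

Lemma lsum_box_eigr b s r d K :
  lsum (eigr b s r) (box d K) =
  2 * sumj (fun j => Rpower (b j) r * sumj (fun k => Rpower (INR k) (- (r * s j))) K) d.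
Proof.
  rewrite lsum_box, <- sumj_scal. apply sumj_ext. intros j Hj. rewrite lsum_boxk. simpl.
  rewrite <- !sumj_scal. apply sumj_ext. intros; ring.
Qed.

Lemma lsum_box_eig2 a b s d K :
  lsum (eig a b s d) (box d K) =
  2 * sumj (fun j => b j * sumj (fun k => Rpower (INR k) (- s j)) K) d.
Proof.
  rewrite lsum_box, <- sumj_scal. apply sumj_ext. intros j Hj. rewrite lsum_boxk. simpl.
  rewrite <- !sumj_scal. apply sumj_ext. intros; ring.
Qed.

Lemma tailj a b s c (H : Hyp a b s c) j r t K0 : (1 <= j)%nat -> 0 < r < 1 -> 0 < t ->
  1 < r * s 1%nat -> / t < INR (S K0) ->
  b j * (zeta (s j) - sumj (fun k => Rpower (INR k) (- s j)) (S K0)) <=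
  Rpower t (1 - r) * Rpower (b j) r *
    (zeta (r * s j) - sumj (fun k => Rpower (INR k) (- (r * s j))) (S K0)).
Proof.
  intros Hj Hr Ht Hrs HK.
  assert (Hbj : 0 < b j) by (apply (hbp _ _ _ _ H); auto).
  assert (Hb1 : b j <= 1) by (apply (beta_le1 _ _ _ _ H); auto).
  assert (Hsj : 1 < s j) by (apply (sigma_gt1 _ _ _ _ H); auto).
  assert (Hrsj : 1 < r * s j).
  { assert (s 1%nat <= s j) by (apply (sigma_ge _ _ _ _ H); auto). nra. }
  set (A := fun k => b j * zt (s j) k).
  set (B := fun k => (Rpower t (1 - r) * Rpower (b j) r) * zt (r * s j) k).
  assert (HexB : ex_series B).
  { exact (@ex_series_scal_l R_AbsRing R_NormedModule _ _ (proj1 (zt_ex _ Hrsj))). }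
  destruct (tail_cmp A B (S K0) ltac:(lia)) as [HexA Hcmp].
  - intros n. unfold A. apply Rmult_le_pos; [lra| apply Rlt_le, zt_pos].
  - auto.
  - intros k Hk. unfold A, B.
    set (x := b j * zt (s j) k).
    assert (Hx0 : 0 < x) by (unfold x; apply Rmult_lt_0_compat; auto; apply zt_pos).
    assert (Hk1 : 1 <= INR (S k)) by (rewrite S_INR; generalize (pos_INR k); lra).
    assert (Hxt : x < t).
    { unfold x, zt.
      assert (Hle : Rpower (INR (S k)) (- s j) <= Rpower (INR (S k)) (Ropp 1)) by (apply rp_anti_exp; lra).
      rewrite (Rpower_Ropp (INR (S k)) 1), Rpower_1 in Hle by lra.
      assert (INR (S K0) <= INR (S k)) by (apply le_INR; lia).
      assert (/ INR (S k) < t).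
      { assert (Hti : 0 < / t) by (apply Rinv_0_lt_compat; lra).
        assert (Hc := Rinv_lt_contravar (/ t) (INR (S k)) ltac:(apply Rmult_lt_0_compat; lra) ltac:(lra)).
        rewrite Rinv_inv in Hc. auto. }
      assert (0 < Rpower (INR (S k)) (- s j)) by apply rp_pos. nra. }
    assert (Hxr := rp_lt_t t x r (conj Hx0 Hxt) Hr).
    assert (Exr : Rpower x r = Rpower (b j) r * zt (r * s j) k).
    { unfold x. rewrite rp_prod by (auto; apply zt_pos). unfold zt. rewrite Rpower_mult.
      f_equal. f_equal. ring. }
    rewrite Exr in Hxr. fold x. lra.
  - unfold A, B in Hcmp. rewrite !Series_scal_l in Hcmp.
    simpl pred in Hcmp. rewrite !sum_n_scal_R in Hcmp.
    rewrite !zt_partial in Hcmp. unfold zeta. lra.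
Qed.

Lemma sumj_minus f g d : sumj (fun j => f j - g j) d = sumj f d - sumj g d.
Proof. induction d; simpl; [lra| rewrite IHd; lra]. Qed.

Lemma lra_aux x y z u v : x <= y*z*(2*u) -> y*z*(2*u) <= y*z*v -> 1 <= z -> x + 1 <= z + y*z*v.
Proof. intros; lra. Qed.

Lemma split_sum (g h : nat -> R) N d :
  (forall j, (1 <= j)%nat -> 0 <= g j <= 1) -> (forall j, (N < j)%nat -> g j <= h j) ->
  (forall j, 0 <= h j) -> sumj g d <= INR N + sumj h d.
Proof.
  intros Hg Hgh Hh.
  assert (forall d, sumj g d <= INR (Nat.min d N) + sumj h d).
  { induction d0; cbn [sumj]. simpl. lra.
    destruct (le_lt_dec (S d0) N).
    - rewrite Nat.min_l by lia. rewrite (Nat.min_l d0) in IHd0 by lia. rewrite S_INR.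
      specialize (Hg (S d0) ltac:(lia)). specialize (Hh (S d0)). lra.
    - rewrite Nat.min_r by lia. rewrite (Nat.min_r d0) in IHd0 by lia.
      specialize (Hgh (S d0) l). lra. }
  specialize (H d). assert (INR (Nat.min d N) <= INR N) by (apply le_INR; lia). lra.
Qed.

Lemma upper_core a b s c (H : Hyp a b s c) r A' N1 :
  0 < r < 1 -> 1 < r * s 1%nat -> 1 < r * A' ->
  (forall d, (N1 <= d)%nat -> (2 <= d)%nat -> b d <= Rpower (INR d) (- A')) ->
  SPT_with a b s (2 * r / (1 - r)).
Proof.
  intros Hr Hrs HrA Hdec.
  set (p := 2 * r / (1 - r)).
  assert (Hp : 0 < p) by (unfold p; apply Rdiv_lt_0_compat; lra).
  set (N := Nat.max N1 2).
  set (Br := INR N + (r * A') / (r * A' - 1)).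
  assert (HBr0 : 0 < Br).
  { unfold Br. assert (0 < r * A' / (r * A' - 1)) by (apply Rdiv_lt_0_compat; lra).
    generalize (pos_INR N); lra. }
  assert (HBr : forall d, sumj (fun j => Rpower (b j) r) d <= Br).
  { intros d. apply Rle_trans with (INR N + sumj (fun j => Rpower (INR j) (- (r * A'))) d).
    - apply split_sum.
      + intros j Hj. split. apply Rlt_le, rp_pos.
        assert (0 < b j) by (apply (hbp _ _ _ _ H); auto).
        assert (b j <= 1) by (apply (beta_le1 _ _ _ _ H); auto).
        unfold Rpower. rewrite <- exp_0. apply exp_le'.
        assert (ln (b j) <= 0) by (rewrite <- ln_1; apply ln_le'; lra). nra.
      + intros j Hj. assert (0 < b j) by (apply (hbp _ _ _ _ H); lia).
        assert (Hb := Hdec j ltac:(lia) ltac:(lia)).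
        replace (- (r * A')) with (- A' * r) by ring. rewrite <- Rpower_mult.
        apply Rle_Rpower_l. lra. auto.
      + intros; apply Rlt_le, rp_pos.
    - unfold Br. generalize (zeta_partial (r * A') d HrA). lra. }
  set (Zr := (r * s 1%nat) / (r * s 1%nat - 1)).
  assert (HZr : forall j, (1 <= j)%nat -> zeta (r * s j) <= Zr).
  { intros j Hj. unfold zeta. apply Rle_trans with (Series (zt (r * s 1%nat))).
    apply zt_mono; auto. assert (s 1%nat <= s j) by (apply (sigma_ge _ _ _ _ H); auto). nra.
    apply zt_ex; auto. }
  assert (HZr0 : 0 < Zr) by (unfold Zr; apply Rdiv_lt_0_compat; lra).
  set (M := 2 * Zr * Br).
  assert (HM0 : 0 < M) by (unfold M; nra).
  assert (HM : forall d, 2 * sumj (fun j => Rpower (b j) r * zeta (r * s j)) d <= M).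
  { intros d. apply Rle_trans with (2 * (Zr * sumj (fun j => Rpower (b j) r) d)).
    - apply Rmult_le_compat_l. lra. rewrite <- sumj_scal. apply sumj_le. intros j Hj.
      assert (0 < Rpower (b j) r) by apply rp_pos. specialize (HZr j ltac:(lia)). nra.
    - unfold M. specialize (HBr d). nra. }
  set (b1 := b 1%nat).
  assert (Hb1 : 0 < b1) by (apply (hbp _ _ _ _ H); auto).
  set (kap := exp (- (r / (1 - r)) * ln (2 * b1 / M))).
  assert (Hkap : 0 < kap) by apply exp_pos.
  split. lra.
  exists (1 + kap * M). split. nra.
  intros d eps Hd He.
  set (L := ln (2 * b1 / M) + 2 * ln eps).
  set (t := exp (L / (1 - r))).
  assert (Ht : 0 < t) by apply exp_pos.
  assert (Ht1 : Rpower t (1 - r) = 2 * b1 / M * eps ^ 2).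
  { unfold Rpower, t. rewrite ln_exp. replace ((1 - r) * (L / (1 - r))) with L by (field; lra).
    unfold L. rewrite exp_plus, exp_ln by (apply Rdiv_lt_0_compat; lra).
    f_equal. replace (2 * ln eps) with (ln eps + ln eps) by ring. rewrite exp_plus, exp_ln by lra. ring. }
  assert (Htr : Rpower t (- r) = kap * Rpower eps (- p)).
  { unfold Rpower, t, kap. rewrite ln_exp, <- exp_plus. f_equal. unfold L, p. field. lra. }
  destruct (nat_large (/ t)) as [K0 HK0].
  assert (HK : / t < INR (S K0)) by (rewrite S_INR; lra).
  set (K := S K0).
  set (Bx := box d K).
  set (P := fun x => if Rle_dec t (eig a b s d x) then true else false).
  set (F := filter P Bx).
  set (G := filter (fun x => negb (P x)) Bx).
  set (Sl := None :: F).
  assert (HinF : forall x, In x F -> In x Bx /\ t <= eig a b s d x).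
  { intros x Hx. unfold F in Hx. apply filter_In in Hx. destruct Hx as [Hx Hp'].
    unfold P in Hp'. destruct (Rle_dec t (eig a b s d x)); [auto| discriminate]. }
  assert (HinG : forall x, In x G -> In x Bx /\ eig a b s d x < t).
  { intros x Hx. unfold G in Hx. apply filter_In in Hx. destruct Hx as [Hx Hp'].
    unfold P in Hp'. destruct (Rle_dec t (eig a b s d x)); [discriminate| split; auto; lra]. }
  assert (HBxS : forall x, In x Bx -> exists j k bb, x = Some (j, k, bb) /\ (1 <= j <= d)%nat /\ (1 <= k <= K)%nat).
  { intros x Hx. apply in_box; auto. }
  assert (Heigr : forall x, In x Bx -> 0 < eig a b s d x /\ Rpower (eig a b s d x) r = eigr b s r x).
  { intros x Hx. destruct (HBxS x Hx) as [j [k [bb [E [Hj Hk]]]]].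
    split. subst x. simpl. apply Rmult_lt_0_compat. apply (hbp _ _ _ _ H); lia. apply rp_pos.
    apply (eigr_eq _ _ _ _ H d r x (or_intror I) j k bb E); lia. }
  assert (Heigr0 : forall x, In x Bx -> 0 <= eigr b s r x).
  { intros x Hx. destruct (Heigr x Hx) as [_ E]. rewrite <- E. apply Rlt_le, rp_pos. }
  assert (HNS : NoDup Sl).
  { constructor. intros HF. destruct (HinF None HF) as [HB _]. destruct (HBxS None HB) as [j [k [bb [E _]]]]. discriminate.
    apply NoDup_filter, nodup_box. }
  assert (HVS : List.Forall (valid_idx d) Sl).
  { constructor. simpl; auto. apply List.Forall_forall. intros x Hx.
    destruct (HinF x Hx) as [HB _]. generalize (valid_box d K). rewrite List.Forall_forall. auto. }
  assert (HeigrBx : lsum (eigr b s r) Bx <= 2 * sumj (fun j => Rpower (b j) r * sumj (fun k => Rpower (INR k) (- (r * s j))) K) d).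
  { unfold Bx. rewrite lsum_box_eigr. lra. }
  assert (HcountF : INR (length F) <= Rpower t (- r) * lsum (eigr b s r) Bx).
  { apply Rle_trans with (Rpower t (- r) * lsum (eigr b s r) F).
    - rewrite <- lsum_scal. rewrite <- (Rmult_1_r (INR (length F))). apply lsum_const_lb.
      intros x Hx. destruct (HinF x Hx) as [HB Htx]. destruct (Heigr x HB) as [_ E]. rewrite <- E.
      apply rp_ge_t; lra.
    - apply Rmult_le_compat_l. apply Rlt_le, rp_pos.
      rewrite (lsum_filter (eigr b s r) P Bx). fold F G.
      assert (0 <= lsum (eigr b s r) G).
      { apply lsum_nonneg. intros x Hx. apply Heigr0. apply HinG; auto. }
      lra. }
  set (Pk := fun x => sumj (fun k => Rpower (INR k) (- x)) K).
  set (Sz := sumj (fun j => b j * zeta (s j)) d).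
  set (Sp := sumj (fun j => b j * Pk (s j)) d).
  set (Rz := sumj (fun j => Rpower (b j) r * zeta (r * s j)) d).
  set (Rp := sumj (fun j => Rpower (b j) r * Pk (r * s j)) d).
  assert (HRp : lsum (eigr b s r) Bx = 2 * Rp).
  { unfold Bx. rewrite lsum_box_eigr. reflexivity. }
  assert (HSp : lsum (eig a b s d) Bx = 2 * Sp).
  { unfold Bx. rewrite lsum_box_eig2. reflexivity. }
  assert (HRpz : Rp <= Rz).
  { apply sumj_le. intros j Hj. apply Rmult_le_compat_l. apply Rlt_le, rp_pos.
    apply psum_le_zeta. assert (s 1%nat <= s j) by (apply (sigma_ge _ _ _ _ H); lia). nra. }
  assert (HRz : 2 * Rz <= M) by apply HM.
  assert (Htrp : 0 < Rpower t (- r)) by apply rp_pos.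
  assert (Hepsp : 1 <= Rpower eps (- p)).
  { unfold Rpower. rewrite <- exp_0. apply exp_le'.
    assert (ln eps < 0) by (rewrite <- ln_1; apply ln_increasing; lra). nra. }
  assert (Hlen : INR (length Sl) <= (1 + kap * M) * Rpower eps (- p)).
  { unfold Sl. simpl length. rewrite S_INR. rewrite HRp in HcountF.
    assert (Hq : Rpower t (- r) * (2 * Rp) <= Rpower t (- r) * M) by (apply Rmult_le_compat_l; lra).
    rewrite Htr in Hq, HcountF. replace ((1 + kap * M) * Rpower eps (- p)) with (Rpower eps (- p) + kap * Rpower eps (- p) * M) by ring. exact (lra_aux _ _ _ _ _ HcountF Hq Hepsp). }
  set (t1r := Rpower t (1 - r)) in *.
  assert (Ht1r : 0 < t1r) by apply rp_pos.
  assert (HGb : lsum (eig a b s d) G <= t1r * (2 * Rp)).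
  { rewrite <- HRp. apply Rle_trans with (lsum (fun x => t1r * eigr b s r x) G).
    - apply lsum_le. intros x Hx. destruct (HinG x Hx) as [HB Hxt]. destruct (Heigr x HB) as [Hx0 E].
      rewrite <- E. apply rp_lt_t; auto.
    - rewrite lsum_scal. apply Rmult_le_compat_l. lra.
      rewrite (lsum_filter (eigr b s r) P Bx). fold F G.
      assert (0 <= lsum (eigr b s r) F).
      { apply lsum_nonneg. intros x Hx. apply Heigr0. apply HinF; auto. }
      lra. }
  assert (Htail : Sz - Sp <= t1r * Rz - t1r * Rp).
  { unfold Sz, Sp, Rz, Rp. rewrite <- !sumj_minus, <- !sumj_scal, <- sumj_minus.
    apply sumj_le. intros j Hj.
    assert (Hq := tailj _ _ _ _ H j r t K0 ltac:(lia) Hr Ht Hrs HK). fold t1r in Hq.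
    unfold Pk. fold K in Hq. nra. }
  assert (HFs : lsum (eig a b s d) Bx = lsum (eig a b s d) F + lsum (eig a b s d) G).
  { rewrite (lsum_filter (eig a b s d) P Bx). reflexivity. }
  assert (HT := total_eq a b s d). fold Sz in HT.
  assert (HT1 := total_ge_b1 _ _ _ _ H d Hd). fold b1 in HT1.
  assert (HtM : t1r * M = 2 * b1 * eps ^ 2) by (rewrite Ht1; field; lra).
  assert (HtRz : t1r * (2 * Rz) <= t1r * M) by (apply Rmult_le_compat_l; lra).
  assert (He2 : eps ^ 2 * (2 * b1) <= eps ^ 2 * total a b s d) by (apply Rmult_le_compat_l; [apply pow2_ge_0| lra]).
  assert (Hmain : total a b s d - subset_sum a b s d Sl <= eps ^ 2 * total a b s d).
  { change (subset_sum a b s d Sl) with (sumj a d + lsum (eig a b s d) F). nra. }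
  assert (Herr : err a b s d (length Sl) <= eps * err a b s d 0).
  { apply (err2_nor _ _ _ _ H); auto. lra. unfold err2.
    assert (subset_sum a b s d Sl <= top_sum a b s d (length Sl)) by (apply (top_ge _ _ _ _ H); auto).
    lra. }
  destruct (ex_min (fun n => err a b s d n <= eps * err a b s d 0) (length Sl) Herr) as [m [Hm [Pm Hmin]]].
  exists m. split. split; auto.
  apply le_INR in Hm. lra.
Qed.

Lemma spt_upper a b s c (H : Hyp a b s c) p :
  Rbar_lt 1 (Astar b) -> two_over_Am1 (Astar b) < p -> 2 / (s 1%nat - 1) < p ->
  SPT_with a b s p.
Proof.
  intros HA H2 Hs.
  assert (Hs1 := hs1 _ _ _ _ H).
  assert (Hp : 0 < p) by (assert (0 < 2 / (s 1%nat - 1)) by (apply Rdiv_lt_0_compat; lra); lra).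
  set (r := p / (p + 2)).
  assert (Hr : 0 < r < 1).
  { unfold r. split. apply Rdiv_lt_0_compat; lra.
    apply (Rmult_lt_reg_r (p + 2)). lra. unfold Rdiv. rewrite Rmult_assoc, Rinv_l by lra. lra. }
  assert (Ep : p = 2 * r / (1 - r)) by (unfold r; field; split; lra).
  assert (Hps : 2 < p * (s 1%nat - 1)).
  { apply (Rmult_lt_compat_r (s 1%nat - 1)) in Hs; [|lra].
    replace (2 / (s 1%nat - 1) * (s 1%nat - 1)) with 2 in Hs by (field; lra). lra. }
  assert (Hrs : 1 < r * s 1%nat).
  { unfold r. apply (Rmult_lt_reg_r (p + 2)). lra.
    replace (p / (p + 2) * s 1%nat * (p + 2)) with (p * s 1%nat) by (field; lra). lra. }
  assert (Hinv : forall A, (p + 2) / p < A -> 1 < r * A).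
  { intros A HA'. unfold r. apply (Rmult_lt_reg_r (p + 2) ); [lra|].
    replace (p / (p + 2) * A * (p + 2)) with (p * A) by (field; lra).
    apply (Rmult_lt_compat_l p) in HA'; auto.
    replace (p * ((p + 2) / p)) with (p + 2) in HA' by (field; lra). lra. }
  set (u := fun d => ln (1 / b d) / ln (INR d)).
  assert (Hev : exists A' N1, 1 < r * A' /\ forall d, (N1 <= d)%nat -> A' < u d).
  { unfold Astar in HA, H2. fold u in HA, H2.
    destruct (ex_LimInf_seq u) as [l Hl]. rewrite (is_LimInf_seq_unique _ _ Hl) in HA, H2.
    destruct l as [la| |]; simpl in HA, H2.
    - assert (Hla : (p + 2) / p < la).
      { apply (Rmult_lt_compat_r (la - 1)) in H2; [|lra].
        replace (2 / (la - 1) * (la - 1)) with 2 in H2 by (field; lra).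
        replace ((p + 2) / p) with (1 + 2 / p) by (field; lra).
        apply (Rmult_lt_reg_l p); auto. replace (p * (1 + 2 / p)) with (p + 2) by (field; lra). lra. }
      set (A' := ((p + 2) / p + la) / 2).
      assert (He : 0 < la - A') by (unfold A'; lra).
      destruct (Hl (mkposreal _ He)) as [_ [N HN]]. simpl in HN.
      exists A', N. split. apply Hinv. unfold A'; lra.
      intros d Hd. specialize (HN d Hd). lra.
    - destruct (Hl ((p + 2) / p + 1)) as [N HN].
      exists ((p + 2) / p + 1), N. split. apply Hinv. lra. auto.
    - contradiction. }
  destruct Hev as [A' [N1 [HrA Hu]]].
  rewrite Ep. apply (upper_core _ _ _ _ H r A' N1); auto.
  intros d Hd Hd2.
  specialize (Hu d Hd). unfold u in Hu.
  assert (Hbd : 0 < b d) by (apply (hbp _ _ _ _ H); lia).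
  assert (Hdr : 1 < INR d) by (apply lt_1_INR; lia).
  assert (Hln : 0 < ln (INR d)) by (rewrite <- ln_1; apply ln_increasing; lra).
  replace (ln (1 / b d)) with (- ln (b d)) in Hu by (unfold Rdiv; rewrite Rmult_1_l, ln_Rinv; auto).
  apply (Rmult_lt_compat_r (ln (INR d))) in Hu; auto.
  replace (- ln (b d) / ln (INR d) * ln (INR d)) with (- ln (b d)) in Hu by (field; lra).
  rewrite <- (exp_ln (b d)) by auto. unfold Rpower. apply exp_le'. lra.
Qed.

Theorem theorem2p2 (alpha beta sigma : nat -> R) (c : R) :
  (forall j, (1 <= j)%nat -> 0 <= alpha j) ->
  beta 1%nat <= 1 ->
  (forall j, (1 <= j)%nat -> beta (S j) <= beta j) ->
  (forall j, (1 <= j)%nat -> 0 < beta j) ->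
  1 < sigma 1%nat ->
  (forall j, (1 <= j)%nat -> sigma j <= sigma (S j)) ->
  0 < c ->
  (forall j, (1 <= j)%nat -> alpha j <= c * beta j) ->
  (SPT alpha beta sigma <-> Rbar_lt 1 (Astar beta)) /\
  (Rbar_lt 1 (Astar beta) ->
     is_inf (SPT_with alpha beta sigma)
       (Rmax (two_over_Am1 (Astar beta)) (2 / (sigma 1%nat - 1)))).
Proof.
  intros h1 h2 h3 h4 h5 h6 h7 h8.
  assert (H : Hyp alpha beta sigma c) by (constructor; auto).
  assert (Hs2 : 0 < 2 / (sigma 1%nat - 1)) by (apply Rdiv_lt_0_compat; lra).
  assert (Lp : forall p, SPT_with alpha beta sigma p -> 2 / (sigma 1%nat - 1) <= p).
  { intros p Hp. assert (Hq := spt_p_sigma _ _ _ _ H p Hp).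
    apply (Rmult_le_reg_r (sigma 1%nat - 1)). lra.
    replace (2 / (sigma 1%nat - 1) * (sigma 1%nat - 1)) with 2 by (field; lra). lra. }
  assert (LA : forall p, SPT_with alpha beta sigma p ->
             Rbar_lt 1 (Astar beta) /\ two_over_Am1 (Astar beta) <= p).
  { intros p Hp. assert (Hp0 : 0 < p) by (generalize (Lp p Hp); lra).
    assert (Hq := spt_astar _ _ _ _ H p Hp Hp0).
    assert (0 < 2 / p) by (apply Rdiv_lt_0_compat; lra).
    destruct (Astar beta) as [la| |]; simpl in *.
    - split. lra.
      apply (Rmult_le_reg_r (la - 1)). lra.
      replace (2 / (la - 1) * (la - 1)) with 2 by (field; lra).
      apply (Rmult_le_compat_l p) in Hq; [|lra].
      replace (p * (1 + 2 / p)) with (p + 2) in Hq by (field; lra). lra.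
    - split; auto. lra.
    - contradiction. }
  split.
  - split.
    + intros [p Hp]. apply (LA p Hp).
    + intros HA. exists (Rmax (two_over_Am1 (Astar beta)) (2 / (sigma 1%nat - 1)) + 1).
      apply (spt_upper _ _ _ _ H); auto.
      generalize (Rmax_l (two_over_Am1 (Astar beta)) (2 / (sigma 1%nat - 1))); lra.
      generalize (Rmax_r (two_over_Am1 (Astar beta)) (2 / (sigma 1%nat - 1))); lra.
  - intros HA. split.
    + intros p Hp. apply Rmax_lub. apply (LA p Hp). apply Lp; auto.
    + intros y Hy. set (m := Rmax (two_over_Am1 (Astar beta)) (2 / (sigma 1%nat - 1))).
      destruct (Rle_or_lt y m) as [ok|Hlt]; auto. exfalso.
      assert (Hsp : SPT_with alpha beta sigma ((y + m) / 2)).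
      { apply (spt_upper _ _ _ _ H); auto.
        generalize (Rmax_l (two_over_Am1 (Astar beta)) (2 / (sigma 1%nat - 1))); fold m; lra.
        generalize (Rmax_r (two_over_Am1 (Astar beta)) (2 / (sigma 1%nat - 1))); fold m; lra. }
      specialize (Hy _ Hsp). lra.
Qed.
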